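(* Let $h\geq 3$. For each $(r,s)\in\{(0,2),(4,0)\}$ there exists a $(K_2,S(C_h))$-URGDD$(r,s)$ of $C_{h(2)}$.
   Context: For integers $m,n$, $C_{m(n)}$ is the graph with vertex set $X^1\cup\cdots\cup X^m$, where the $X^i$ are pairwise disjoint sets of size $n$, and edge set $\{\{u,w\}: u\in X^i, w\in X^j, |i-j|\equiv 1\pmod m\}$. For $h\geq3$, an $h$-sun is the graph on $2h$ distinct vertices $a_1,\ldots,a_h,b_1,\ldots,b_h$ consisting of the $h$-cycle $(a_1,\ldots,a_h)$ together with the edges $\{a_i,b_i\}$, $i=1,\ldots,h$. A $(K_2,S(C_h))$-URGDD$(r,s)$ of $C_{m(n)}$ is a partition of the edge set of $C_{m(n)}$ into $r$ classes each of which is a perfect matching of $C_{m(n)}$ and $s$ classes each of which is a set of vertex-disjoint $h$-suns (subgraphs of $C_{m(n)}$) covering every vertex exactly once. *)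

(* Defs.v *)
From mathcomp Require Import all_boot.
Set Implicit Arguments. Unset Strict Implicit. Unset Printing Implicit Defensive.

(* Vertices of C_{m(n)}: pairs (i, x) with i : 'I_m the index of the part X^i
   and x : 'I_n the position inside X^i. *)
Definition cvert (m n : nat) := ('I_m * 'I_n)%type.

Definition cadj (m n : nat) (u w : cvert m n) : bool :=
  ((u.1 + 1) %% m == w.1) || ((w.1 + 1) %% m == u.1).

Definition Cmn_edges (m n : nat) : {set {set cvert m n}} :=
  [set [set u; w] | u in [set: cvert m n], w in [set: cvert m n] & cadj u w].

Section Factors.
Variable V : finType.

Definition perfect_matching (M : {set {set V}}) : Prop :=
  (forall e, e \in M -> #|e| = 2) /\
  (forall v : V, #|[set e in M | v \in e]| = 1).

(* an h-sun given by a_0..a_{h-1} (cycle) and pendant vertices b_0..b_{h-1} *)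
Definition sun_ok (h : nat) (s : ('I_h -> V) * ('I_h -> V)) : Prop :=
  injective s.1 /\ injective s.2 /\ (forall i j, s.1 i != s.2 j).

Definition sun_vertices (h : nat) (s : ('I_h -> V) * ('I_h -> V)) : {set V} :=
  [set s.1 i | i : 'I_h] :|: [set s.2 i | i : 'I_h].

Definition sun_edges (h : nat) (s : ('I_h -> V) * ('I_h -> V)) : {set {set V}} :=
  [set [set s.1 i; s.1 (ordS i)] | i : 'I_h] :|: [set [set s.1 i; s.2 i] | i : 'I_h].

Definition sun_factor (h : nat) (F : {set {set V}}) : Prop :=
  exists (k : nat) (S : 'I_k -> ('I_h -> V) * ('I_h -> V)),
    (forall t, sun_ok (S t)) /\
    (forall v : V, #|[set t | v \in sun_vertices (S t)]| = 1) /\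
    F = \bigcup_(t < k) sun_edges (S t).
End Factors.

(* A (K_2, S(C_h))-URGDD(r,s) of C_{m(n)}: a colouring c of the edges with
   r + s colours (= partition of the edge set into r + s classes) such that the
   first r classes are perfect matchings and the last s are h-sun factors. *)
Definition urgdd (h r s m n : nat) : Prop :=
  exists c : {set cvert m n} -> 'I_(r + s),
    (forall i : 'I_r,
        perfect_matching [set e in Cmn_edges m n | c e == lshift s i]) /\
    (forall j : 'I_s,
        sun_factor h [set e in Cmn_edges m n | c e == rshift r j]).

(* Main.v *)
Require Import Defs.
From mathcomp Require Import all_boot.

Set Implicit Arguments. Unset Strict Implicit. Unset Printing Implicit Defensive.

Definition xr (x y : nat) := (x + y) %% 2.
Definition Q (t x y : nat) : nat :=
  match t with
  | 0 => 2*x + y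
  | 1 => 2*(1-y) + (1-x)
  | 2 => 2*(1-y) + xr x y
  | _ => 2*(xr 1 (xr x y)) + (1-x)
  end.
Definition good p c := all (fun x => all (fun m => count (pred1 m)
  [:: Q c x 0; Q c x 1; Q p 0 x; Q p 1 x] == 1) (iota 0 4)) [:: 0;1].
Definition ty h i := if odd h then (if i == 0 then 0 else if i == 1 then 3
  else if i == 2 then 2 else if odd i then 0 else 1) else (if odd i then 1 else 0).

Lemma good_step h j : good (ty h j) (ty h j.+1).
Proof.
rewrite /ty; case: (odd h); case: j => [|[|[|j]]] //=; by case: (odd j).
Qed.

Lemma good_wrap h : 2 < h -> good (ty h h.-1) (ty h 0).
Proof.
case: h => [|[|[|h]]] // _ /=.
rewrite /ty /=; case: h => [|h] //=.
by case: (odd h).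
Qed.

Lemma good_all h (i : nat) : 2 < h -> i < h -> good (ty h ((i + h).-1 %% h)) (ty h i).
Proof.
move=> h3 ih; case: i ih => [|j] ih.
  rewrite add0n modn_small; first exact: good_wrap.
  by case: h h3 {ih}.
by rewrite addSn /= modnDr modn_small ?good_step // ltnW.
Qed.

Lemma Q_lt4 t x y : x < 2 -> y < 2 -> Q t x y < 4.
Proof.
case: x => [|[|]] // _; case: y => [|[|]] // _; by case: t => [|[|[|t]]].
Qed.

Lemma good_spec p c x m : good p c -> x < 2 -> m < 4 ->
  count (pred1 m) [:: Q c x 0; Q c x 1; Q p 0 x; Q p 1 x] = 1.
Proof.
move=> /allP G Hx Hm.
have Hx' : x \in [:: 0; 1] by case: x Hx => [|[|]].
have /allP := G x Hx' => /(_ m); rewrite mem_iota /= => /(_ Hm) /eqP //.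
Qed.

Lemma count1P (T : eqType) (P : pred T) (s : seq T) : count P s = 1 ->
  exists p, [/\ P p, p \in s & forall q, P q -> q \in s -> q = p].
Proof.
rewrite -size_filter => Hs.
case E: (filter P s) Hs => [|p [|]] // _.
have : p \in filter P s by rewrite E inE.
rewrite mem_filter => /andP [Pp ps]; exists p; split => // q Pq qs.
have : q \in filter P s by rewrite mem_filter Pq.
by rewrite E inE => /eqP.
Qed.

Definition nx h (u : cvert h 2) (y : 'I_2) : cvert h 2 := (ordS u.1, y).
Definition edge h (u : cvert h 2) (y : 'I_2) : {set cvert h 2} := [set u; nx u y].

Lemma ordS_neq h (i : 'I_h) : 1 < h -> ordS i != i.
Proof.
move=> h2; apply/eqP => /(congr1 val) /=.
have := ltn_ord i; rewrite leq_eqVlt => /orP [/eqP E|L].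
  by rewrite E modnn => E0; move: E; rewrite -E0 => E1; rewrite -E1 in h2.
by rewrite modn_small // => /eqP; rewrite eqn_leq ltnn.
Qed.

Lemma ordSS_neq h (i : 'I_h) : 2 < h -> ordS (ordS i) != i.
Proof.
move=> h3; apply/eqP => /(congr1 val) /=.
have := ltn_ord i; rewrite leq_eqVlt => /orP [/eqP E|L].
  rewrite E modnn modn_small; last by apply: leq_trans h3.
  by move=> E1; rewrite -E1 in E; rewrite -E in h3.
rewrite (modn_small L).
move: L; rewrite leq_eqVlt => /orP [/eqP E|L].
  by rewrite E modnn => E0; rewrite -E0 in E; rewrite -E in h3.
by rewrite modn_small // => /eqP; rewrite eqn_leq ltnNge ltnW.
Qed.

Lemma cadjE h (u w : cvert h 2) : cadj u w = (w.1 == ordS u.1) || (u.1 == ordS w.1).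
Proof.
rewrite /cadj !addn1 -[w.1 == _]val_eqE -[u.1 == _]val_eqE /=.
by rewrite ![_ == _.+1 %% h]eq_sym.
Qed.

Lemma in_edge h (v u : cvert h 2) y : (v \in edge u y) = (v == u) || (v == nx u y).
Proof. by rewrite !inE. Qed.

Lemma edge_in h (u : cvert h 2) y : edge u y \in Cmn_edges h 2.
Proof.
apply/imset2P; exists u (nx u y); rewrite ?inE //=.
by rewrite cadjE eqxx.
Qed.

Lemma memC h (e : {set cvert h 2}) : e \in Cmn_edges h 2 -> exists u y, e = edge u y.
Proof.
case/imset2P => u w _; rewrite !inE /= cadjE => /orP [/eqP E|/eqP E] ->.
  by exists u, w.2; rewrite /edge /nx -E; case: w {E}.
exists w, u.2; rewrite /edge /nx -E setUC; by case: u {E}.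
Qed.

Lemma edge_inj h (u u' : cvert h 2) y y' : 2 < h ->
  edge u y = edge u' y' -> (u, y) = (u', y').
Proof.
move=> h3 E.
have h2 : 1 < h by apply: ltnW.
have : u \in edge u' y' by rewrite -E !inE eqxx.
rewrite in_edge => /orP [/eqP Eu|/eqP Eu].
  subst u'.
  have : nx u y \in edge u y' by rewrite -E !inE eqxx orbT.
  rewrite in_edge => /orP [/eqP H|/eqP H].
    by move: H => /(congr1 fst) /= H; have := ordS_neq u.1 h2; rewrite H eqxx.
  by case: H => ->.
have : u' \in edge u y by rewrite E !inE eqxx.
rewrite in_edge => /orP [/eqP H|/eqP H].
  subst u'; move: Eu => /(congr1 fst) /= E1.
  by have := ordS_neq u.1 h2; rewrite -E1 eqxx.
move: Eu => /(congr1 fst) /=; rewrite H /= => E1.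
by have := ordSS_neq u.1 h3; rewrite -E1 eqxx.
Qed.

Definition colr h (K : finType) (k0 : K) (col : cvert h 2 -> 'I_2 -> K)
  (e : {set cvert h 2}) : K :=
  if [pick p : cvert h 2 * 'I_2 | e == edge p.1 p.2] is Some p then col p.1 p.2 else k0.

Lemma colrE h K k0 col (u : cvert h 2) y : 2 < h -> @colr h K k0 col (edge u y) = col u y.
Proof.
move=> h3; rewrite /colr; case: pickP => [p /eqP H|H].
  by have := edge_inj h3 H; case=> -> ->.
by have := H (u, y); rewrite /= eqxx.
Qed.

Lemma pm_gen h (K : finType) k0 col (k : K) : 2 < h ->
  (forall v, exists p : cvert h 2 * 'I_2, [/\ col p.1 p.2 == k, v \in edge p.1 p.2 &
     forall q, col q.1 q.2 == k -> v \in edge q.1 q.2 -> q = p]) ->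
  perfect_matching [set e in Cmn_edges h 2 | colr k0 col e == k].
Proof.
move=> h3 H; split.
  move=> e; rewrite inE => /andP [/memC [u [y ->]] _].
  rewrite cards2; case: eqP => // Eq.
  move: Eq => /(congr1 fst) /= E1.
  by have := ordS_neq u.1 (ltnW h3); rewrite -E1 eqxx.
move=> v; have [p [Hp Hv Hu]] := H v.
suff -> : [set e in [set e in Cmn_edges h 2 | colr k0 col e == k] | v \in e]
   = [set edge p.1 p.2] by rewrite cards1.
apply/setP => e; rewrite !inE; apply/idP/idP.
  case/andP => /andP [/memC [u [y ->]] Hc] Hve.
  rewrite colrE // in Hc.
  by have /= <- := Hu (u, y) Hc Hve.
by move/eqP => ->; rewrite edge_in colrE // Hp Hv.
Qed.

Definition o0 : 'I_2 := @Ordinal 2 0 isT.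
Definition o1 : 'I_2 := @Ordinal 2 1 isT.

Lemma I2_cases (x : 'I_2) : x = o0 \/ x = o1.
Proof.
case: x => [[|[|]] H]; [left|right|by []]; exact: val_inj.
Qed.

Definition colM h (u : cvert h 2) (y : 'I_2) : 'I_(4+0) :=
  @inord 3 (Q (ty h u.1) u.2 y).

Lemma matchings h : 2 < h -> urgdd h 4 0 h 2.
Proof.
move=> h3; exists (colr (@inord 3 0) (@colM h)); split; last by case.
move=> i; apply: pm_gen => // v.
pose s := [:: (v, o0); (v, o1); ((ord_pred v.1, o0), v.2); ((ord_pred v.1, o1), v.2)].
have Hc : count (fun q => colM q.1 q.2 == lshift 0 i) s = 1.
  rewrite /s /= /colM.
  have E : forall a, a < 4 -> (@inord 3 a == lshift 0 i) = (a == i).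
    by move=> a Ha; rewrite -val_eqE /= inordK.
  rewrite !E ?Q_lt4 ?ltn_ord //.
  have := good_spec (good_all h3 (ltn_ord v.1)) (ltn_ord v.2) (ltn_ord i).
  by rewrite /= !addn0.
have [p [Pp ps Pu]] := count1P Hc.
have Hs : forall q, v \in edge q.1 q.2 -> q \in s.
  case=> [u y]; rewrite in_edge /s /= => /orP [/eqP <-|/eqP ->].
    by case: (I2_cases y) => ->; rewrite !inE eqxx ?orbT.
  rewrite /nx /= ordSK.
  by case: u => [a b] /=; case: (I2_cases b) => ->; rewrite !inE eqxx ?orbT.
exists p; split => //.
  move: ps; rewrite /s !inE => /or4P [] /eqP -> /=; rewrite ?in_edge ?eqxx ?orbT //.
  1,2: apply/orP; right; apply/eqP; case: (v) => a b /=; congr pair; by rewrite ord_predK.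
move=> q Hq Hv; exact: Pu _ Hq (Hs _ Hv).
Qed.

Definition jb (j : 'I_2) : 'I_2 := if val j == 0 then o1 else o0.

Lemma jbP (j x : 'I_2) : x != j -> x = jb j.
Proof. by case: (I2_cases j) => ->; case: (I2_cases x) => ->. Qed.

Lemma jb_neq (j : 'I_2) : jb j != j.
Proof. by case: (I2_cases j) => ->. Qed.

Definition colS h (u : cvert h 2) (y : 'I_2) : 'I_(0+2) := u.2.

Lemma suns h : 2 < h -> urgdd h 0 2 h 2.
Proof.
move=> h3; exists (colr (o0 : 'I_(0+2)) (@colS h)); split; first by case.
move=> j.
have jv : val (rshift 0 j) = val j by [].
pose j' : 'I_2 := Ordinal (ltn_ord j).
pose S := fun _ : 'I_1 => ((fun t : 'I_h => ((t, j') : cvert h 2)),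
                           (fun t : 'I_h => ((ordS t, jb j') : cvert h 2))).
exists 1, S; split; [|split].
- move=> t; split; [|split].
  + by move=> a b /= [].
  + move=> a b /= E; apply: ordS_inj; exact: (congr1 fst E).
  + move=> a b /=; apply/eqP => [[_]] E.
    by have := jb_neq j'; rewrite -E eqxx.
- move=> v.
  suff -> : [set t : 'I_1 | v \in sun_vertices (S t)] = setT by rewrite cardsT card_ord.
  apply/setP => t; rewrite !inE /sun_vertices ?inE; apply/orP.
  case: v => a b; case: (eqVneq b j') => E.
    by left; apply/imsetP; exists a => //=; rewrite E.
  right; apply/imsetP; exists (ord_pred a) => //=.
  by rewrite ord_predK -(jbP E).
- apply/setP => e; rewrite big_ord1 !inE; apply/idP/idP.
  + case/andP => /memC [[a b] [y ->]]; rewrite colrE // /colS /=.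
    move=> /eqP /(congr1 val); rewrite jv => Eb.
    have Eb' : b = j' by apply: val_inj.
    rewrite /sun_edges Eb' /edge /nx /=; apply/orP.
    case: (eqVneq y j') => Ey.
      by left; apply/imsetP; exists a => //=; rewrite Ey.
    by right; apply/imsetP; exists a => //=; rewrite -(jbP Ey).
  + rewrite /sun_edges => /orP [] /imsetP [t _ ->] /=.
      have -> : [set (t, j'); (ordS t, j')] = edge ((t, j') : cvert h 2) j' by [].
      by rewrite edge_in colrE //; apply/eqP/val_inj.
    have -> : [set (t, j'); (ordS t, jb j')] = edge ((t, j') : cvert h 2) (jb j') by [].
    by rewrite edge_in colrE //; apply/eqP/val_inj.
Qed.

Theorem lemma3p3 (h : nat) : 3 <= h ->
  urgdd h 0 2 h 2 /\ urgdd h 4 0 h 2.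
Proof.
move=> h3; split; [exact: suns | exact: matchings].
Qed.
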